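(* Let $(H,A,C)$ be a Doi-Hopf datum. Make $D=C^{\mathrm{cop}}\otimes C$ a right $H$-module coalgebra via $(c\otimes d)\cdot h=c\otimes d\cdot h$, and consider Koppinen's algebra $\#(D,A)$. Then $V_3\subseteq\#(D,A)$ is closed under the multiplication $\bullet$, and for $\theta,\theta'\in V_3$, $$(\theta\bullet\theta')(c\otimes d)=\sum\theta(c_{(3)}\otimes d)\,\theta'(c_{(1)}\otimes c_{(2)}).$$ Every normalized element of $V_3$ is a right unit of $V_3$ (i.e. $\theta'\bullet\theta=\theta'$ for all $\theta'\in V_3$), and in particular is idempotent.
   Context: Sweedler notation $\Delta(c)=\sum c_{(1)}\otimes c_{(2)}$, $\rho(m)=\sum m_{<-1>}\otimes m_{<0>}$. Doi-Hopf datum $(H,A,C)$: $H$ bialgebra, $A$ left $H$-comodule algebra, $C$ right $H$-module coalgebra, $C$ flat over the commutative ring $k$. For a right $H$-module coalgebra $D$, Koppinen's smash product $\#(D,A)$ is $\mathrm{Hom}(D,A)$ with product $(f\bullet g)(x)=\sum f(x_{(1)})_{<0>}\,g\big(x_{(2)}\cdot f(x_{(1)})_{<-1>}\big)$ and unit $x\mapsto\varepsilon(x)1_A$; in $C^{\mathrm{cop}}\otimes C$, $\Delta(c\otimes d)=\sum(c_{(2)}\otimes d_{(1)})\otimes(c_{(1)}\otimes d_{(2)})$. $V_3$ is the set of $k$-linear $\theta:C\otimes C\to A$ such that for all $a\in A$, $c,d\in C$: $\theta(c\otimes d)a=\sum a_{<0>}\theta(c\cdot a_{<-2>}\otimes d\cdot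 a_{<-1>})$ and $\sum c_{(1)}\otimes\theta(c_{(2)}\otimes d)=\sum d_{(2)}\cdot\theta(c\otimes d_{(1)})_{<-1>}\otimes\theta(c\otimes d_{(1)})_{<0>}$. $\theta$ is normalized if $\sum\theta(c_{(1)}\otimes c_{(2)})=\varepsilon(c)1_A$. *)

(* Defs.v *)
(* Tensor products are not available in MathComp; elements of a tensor
   product U (x) V are represented by finite lists of pure tensors
   (Sweedler sums), and equality of such elements is tested against all
   bilinear (resp. trilinear) maps into arbitrary R-modules, which is
   exactly equality in U (x)_R V by the universal property. *)
From HB Require Import structures.
From mathcomp Require Import all_boot all_order all_algebra.
Set Implicit Arguments. Unset Strict Implicit. Unset Printing Implicit Defensive.
Import GRing.Theory.
Local Open Scope ring_scope.

Section Defs.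
Variable R : comPzRingType.

Definition islin (U V : lmodType R) (f : U -> V) : Prop :=
  forall (a : R) x y, f (a *: x + y) = a *: f x + f y.

Definition islinR (U : lmodType R) (f : U -> R) : Prop :=
  forall (a : R) x y, f (a *: x + y) = a * f x + f y.

Definition bilin (U V P : lmodType R) (g : U -> V -> P) : Prop :=
  (forall v, islin (fun u => g u v)) /\ (forall u, islin (g u)).

Definition trilin (U V W P : lmodType R) (g : U -> V -> W -> P) : Prop :=
  (forall v w, islin (fun u => g u v w)) /\ (forall u w, islin (fun v => g u v w))
  /\ (forall u v, islin (g u v)).

Definition teq2 (U V : lmodType R) (s t : seq (U * V)) : Prop :=
  forall (P : lmodType R) (g : U -> V -> P), bilin g ->
    \sum_(p <- s) g p.1 p.2 = \sum_(p <- t) g p.1 p.2.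

Definition teq3 (U V W : lmodType R) (s t : seq (U * V * W)) : Prop :=
  forall (P : lmodType R) (g : U -> V -> W -> P), trilin g ->
    \sum_(p <- s) g p.1.1 p.1.2 p.2 = \sum_(p <- t) g p.1.1 p.1.2 p.2.

Definition tscale (U V : lmodType R) (a : R) (s : seq (U * V)) : seq (U * V) :=
  [seq (a *: p.1, p.2) | p <- s].

Definition tlin (U V W : lmodType R) (f : U -> seq (V * W)) : Prop :=
  forall (a : R) x y, teq2 (f (a *: x + y)) (tscale a (f x) ++ f y).

Record coalgebra (C : lmodType R) := Coalgebra {
  cDelta : C -> seq (C * C);
  cEps : C -> R;
  cDelta_lin : tlin cDelta;
  cEps_lin : islinR cEps;
  cCoassoc : forall c,
    teq3 [seq (q.1, q.2, p.2) | p <- cDelta c, q <- cDelta p.1]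
         [seq (p.1, q.1, q.2) | p <- cDelta c, q <- cDelta p.2];
  cCounitl : forall c, \sum_(p <- cDelta c) cEps p.1 *: p.2 = c;
  cCounitr : forall c, \sum_(p <- cDelta c) cEps p.2 *: p.1 = c
}.

Record bialgebra (H : algType R) := Bialgebra {
  hco :> coalgebra H;
  hDelta_mul : forall x y : H,
    teq2 (cDelta hco (x * y))
         [seq (p.1 * q.1, p.2 * q.2) | p <- cDelta hco x, q <- cDelta hco y];
  hDelta_one : teq2 (cDelta hco 1) [:: (1 : H, 1 : H)];
  hEps_mul : forall x y : H, cEps hco (x * y) = cEps hco x * cEps hco y;
  hEps_one : cEps hco 1 = 1
}.

(* left H-comodule algebra structure on the k-algebra A:
   rho a = sum a_<-1> (x) a_<0> *)
Record comodule_algebra (H : algType R) (BH : bialgebra H) (A : algType R) :=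
  ComoduleAlgebra {
  rho : A -> seq (H * A);
  rho_lin : tlin rho;
  rho_coassoc : forall a,
    teq3 [seq (q.1, q.2, p.2) | p <- rho a, q <- cDelta BH p.1]
         [seq (p.1, q.1, q.2) | p <- rho a, q <- rho p.2];
  rho_counit : forall a, \sum_(p <- rho a) cEps BH p.1 *: p.2 = a;
  rho_mul : forall a b : A,
    teq2 (rho (a * b)) [seq (p.1 * q.1, p.2 * q.2) | p <- rho a, q <- rho b];
  rho_one : teq2 (rho 1) [:: (1 : H, 1 : A)]
}.

Record module_coalgebra (H : algType R) (BH : bialgebra H) (C : lmodType R) :=
  ModuleCoalgebra {
  mco :> coalgebra C;
  act : C -> H -> C;
  act_bilin : bilin act;
  act_mul : forall c (h h' : H), act (act c h) h' = act c (h * h');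
  act_one : forall c, act c 1 = c;
  mDelta_act : forall c h,
    teq2 (cDelta mco (act c h))
         [seq (act p.1 q.1, act p.2 q.2) | p <- cDelta mco c, q <- cDelta BH h];
  mEps_act : forall c h, cEps mco (act c h) = cEps mco c * cEps BH h
}.

(* C is flat over R: C (x)_R - preserves injective linear maps *)
Definition flat (C : lmodType R) : Prop :=
  forall (M N : lmodType R) (f : M -> N), islin f -> injective f ->
    forall s : seq (C * M),
      teq2 [seq (p.1, f p.2) | p <- s] [::] -> teq2 s [::].

Section Koppinen.
Variables (H : algType R) (BH : bialgebra H) (A : algType R)
  (CA : comodule_algebra BH A) (C : lmodType R) (MC : module_coalgebra BH C).

(* An element of Hom(C^cop (x) C, A) is represented by the bilinear map
   theta : C -> C -> A with theta c d = theta (c (x) d).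
   Koppinen's product in #(D, A), D = C^cop (x) C, with
   Delta (c (x) d) = sum (c_(2) (x) d_(1)) (x) (c_(1) (x) d_(2)) and
   (c (x) d) . h = c (x) d . h :
   (f . g)(c (x) d) = sum f(c2 (x) d1)_<0> g(c1 (x) d2 . f(c2 (x) d1)_<-1>). *)
Definition kmul (f g : C -> C -> A) : C -> C -> A :=
  fun c d => \sum_(p <- cDelta MC c) \sum_(q <- cDelta MC d)
     \sum_(r <- rho CA (f p.2 q.1)) r.2 * g p.1 (act MC q.2 r.1).

Definition kunit : C -> C -> A := fun c d => (cEps MC c * cEps MC d) *: 1.

Definition V3 (theta : C -> C -> A) : Prop :=
  [/\ bilin theta,
      forall (a : A) c d,
        theta c d * a =
        \sum_(r <- rho CA a) \sum_(s <- cDelta BH r.1)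
            r.2 * theta (act MC c s.1) (act MC d s.2)
    & forall c d,
        teq2 [seq (p.1, theta p.2 d) | p <- cDelta MC c]
             [seq (act MC q.2 r.1, r.2) | q <- cDelta MC d,
                                          r <- rho CA (theta c q.1)]].

Definition normalized (theta : C -> C -> A) : Prop :=
  forall c, \sum_(p <- cDelta MC c) theta p.1 p.2 = cEps MC c *: 1.

End Koppinen.
End Defs.

(* Main.v *)
Require Import Defs.
From mathcomp Require Import all_boot all_order all_algebra.
From Stdlib Require Import FunctionalExtensionality.
Set Implicit Arguments. Unset Strict Implicit. Unset Printing Implicit Defensive.
Import GRing.Theory.
Local Open Scope ring_scope.
Section Lin.
Variable R : comPzRingType.

Lemma lin0 (U V : lmodType R) (f : U -> V) : islin f -> f 0 = 0.
Proof.
move=> Hf; have h := Hf 1 0 0; rewrite !scale1r addr0 in h.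
by apply: (@addrI _ (f 0)); rewrite addr0 -h.
Qed.

Lemma linD (U V : lmodType R) (f : U -> V) : islin f -> forall x y, f (x + y) = f x + f y.
Proof. by move=> Hf x y; have := Hf 1 x y; rewrite !scale1r. Qed.

Lemma linZ (U V : lmodType R) (f : U -> V) : islin f -> forall a x, f (a *: x) = a *: f x.
Proof. by move=> Hf a x; have := Hf a x 0; rewrite !addr0 (lin0 Hf) addr0. Qed.

Lemma linS (U V : lmodType R) (f : U -> V) : islin f ->
  forall I (s : seq I) (F : I -> U), f (\sum_(i <- s) F i) = \sum_(i <- s) f (F i).
Proof.
move=> Hf I s F; elim: s => [|i s IH]; first by rewrite !big_nil (lin0 Hf).
by rewrite !big_cons (linD Hf) IH.
Qed.

Lemma islin_sum (U V : lmodType R) I (s : seq I) (F : I -> U -> V) :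
  (forall i, islin (F i)) -> islin (fun x => \sum_(i <- s) F i x).
Proof.
move=> HF a x y; rewrite scaler_sumr -big_split; apply: eq_bigr => i _; exact: HF.
Qed.

Lemma islin_comp (U V W : lmodType R) (f : U -> V) (g : V -> W) :
  islin f -> islin g -> islin (fun x => g (f x)).
Proof. by move=> Hf Hg a x y; rewrite Hf Hg. Qed.

Lemma bl1 (U V P : lmodType R) (G : U -> V -> P) : bilin G ->
  forall a u v w, G (a *: u + v) w = a *: G u w + G v w.
Proof. by move=> HG a u v w; apply: HG.1. Qed.

Lemma bl2 (U V P : lmodType R) (G : U -> V -> P) : bilin G ->
  forall a u v w, G w (a *: u + v) = a *: G w u + G w v.
Proof. by move=> HG a u v w; apply: HG.2. Qed.

Lemma tlinS (U V W P : lmodType R) (f : U -> seq (V * W)) (G : V -> W -> P) :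
  tlin f -> bilin G -> islin (fun x => \sum_(p <- f x) G p.1 p.2).
Proof.
move=> Hf HG a x y /=; rewrite (Hf a x y P G HG) big_cat big_map /= scaler_sumr.
congr (_ + _); apply: eq_bigr => p _; exact: (linZ (HG.1 p.2)).
Qed.

Lemma tlinS_comp (U0 U V W P : lmodType R) (h : U0 -> U) (f : U -> seq (V * W))
  (G : V -> W -> P) :
  islin h -> tlin f -> bilin G -> islin (fun x => \sum_(p <- f (h x)) G p.1 p.2).
Proof. by move=> Hh Hf HG a x y /=; rewrite Hh; apply: tlinS. Qed.

Lemma coassS (C P : lmodType R) (Co : coalgebra C) (F : C -> C -> C -> P) c :
  trilin F ->
  \sum_(p <- cDelta Co c) \sum_(q <- cDelta Co p.1) F q.1 q.2 p.2 =
  \sum_(p <- cDelta Co c) \sum_(q <- cDelta Co p.2) F p.1 q.1 q.2.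
Proof. by move=> HF; have := cCoassoc Co c HF; rewrite !big_allpairs_dep. Qed.

Definition quadlin (C P : lmodType R) (F : C -> C -> C -> C -> P) :=
  [/\ forall x y z, islin (fun w => F w x y z), forall w y z, islin (fun x => F w x y z),
      forall w x z, islin (fun y => F w x y z) & forall w x y, islin (F w x y)].

Section B.
Variables (C P : lmodType R) (Co : coalgebra C) (F : C -> C -> C -> C -> P).
Hypothesis HF : quadlin F.
Local Notation D := (cDelta Co).

Definition Rc c := \sum_(t <- D c) \sum_(s <- D t.2) \sum_(s' <- D s.2) F t.1 s.1 s'.1 s'.2.

Lemma B2_R c : \sum_(t <- D c) \sum_(s <- D t.1) \sum_(s' <- D t.2) F s.1 s.2 s'.1 s'.2 = Rc c.
Proof.
rewrite /Rc; case: HF => H1 H2 H3 H4.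
apply: (coassS Co (F:=fun u v w => \sum_(s' <- D w) F u v s'.1 s'.2)).
split; [|split].
- move=> v w; apply: islin_sum => i; exact: H1.
- move=> u w; apply: islin_sum => i; exact: H2.
- move=> u v; apply: tlinS; first exact: cDelta_lin.
  by split=> ? ; [exact: H3|exact: H4].
Qed.

Lemma B4_R c : \sum_(p <- D c) \sum_(u <- D p.2) \sum_(v <- D u.1) F p.1 v.1 v.2 u.2 = Rc c.
Proof.
rewrite /Rc; case: HF => H1 H2 H3 H4.
apply: eq_bigr => p _; apply: (coassS Co (F:=fun x y z => F p.1 x y z)).
by split; [|split] => ? ?; [exact: H2|exact: H3|exact: H4].
Qed.

Lemma B3_B4 c : \sum_(p <- D c) \sum_(t <- D p.1) \sum_(v <- D t.2) F t.1 v.1 v.2 p.2 =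
  \sum_(p <- D c) \sum_(u <- D p.2) \sum_(v <- D u.1) F p.1 v.1 v.2 u.2.
Proof.
rewrite /Rc; case: HF => H1 H2 H3 H4.
apply: (coassS Co (F:=fun u v w => \sum_(v' <- D v) F u v'.1 v'.2 w)).
split; [|split].
- move=> v w; apply: islin_sum => i; exact: H1.
- move=> u w; apply: (tlinS (G := fun a b => F u a b w)); first exact: cDelta_lin.
  by split=> ? ; [exact: H2|exact: H3].
- move=> u v; apply: islin_sum => i; exact: H4.
Qed.

Lemma B1_B3 c : \sum_(s <- D c) \sum_(k <- D s.1) \sum_(k' <- D k.1) F k'.1 k'.2 k.2 s.2 =
  \sum_(p <- D c) \sum_(t <- D p.1) \sum_(v <- D t.2) F t.1 v.1 v.2 p.2.
Proof.
rewrite /Rc; case: HF => H1 H2 H3 H4.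
apply: eq_bigr => p _; apply: (coassS Co (F:=fun x y z => F x y z p.2)).
by split; [|split] => ? ?; [exact: H1|exact: H2|exact: H3].
Qed.

Lemma B1_R c : \sum_(s <- D c) \sum_(k <- D s.1) \sum_(k' <- D k.1) F k'.1 k'.2 k.2 s.2 = Rc c.
Proof. by rewrite B1_B3 B3_B4 B4_R. Qed.
Lemma B3_R c : \sum_(p <- D c) \sum_(t <- D p.1) \sum_(v <- D t.2) F t.1 v.1 v.2 p.2 = Rc c.
Proof. by rewrite B3_B4 B4_R. Qed.
End B.
End Lin.
Section Main.
Variables (R : comPzRingType) (H : algType R) (BH : bialgebra H) (A : algType R)
  (CA : comodule_algebra BH A) (C : lmodType R) (MC : module_coalgebra BH C).
Local Notation D := (cDelta MC).
Local Notation DH := (cDelta BH).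
Local Notation rh := (rho CA).
Local Notation ac := (act MC).

Lemma mDeltaS c h (P : lmodType R) (G : C -> C -> P) : bilin G ->
  \sum_(p <- D (ac c h)) G p.1 p.2 =
  \sum_(p <- D c) \sum_(k <- DH h) G (ac p.1 k.1) (ac p.2 k.2).
Proof. by move=> HG; have := mDelta_act MC c h HG; rewrite big_allpairs_dep. Qed.

Lemma rho_mulS a b (P : lmodType R) (G : H -> A -> P) : bilin G ->
  \sum_(r <- rh (a * b)) G r.1 r.2 =
  \sum_(r1 <- rh a) \sum_(r2 <- rh b) G (r1.1 * r2.1) (r1.2 * r2.2).
Proof. by move=> HG; have := rho_mul CA a b HG; rewrite big_allpairs_dep. Qed.

Lemma rho_coassS a (P : lmodType R) (F : H -> H -> A -> P) : trilin F ->
  \sum_(p <- rh a) \sum_(q <- DH p.1) F q.1 q.2 p.2 =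
  \sum_(p <- rh a) \sum_(q <- rh p.2) F p.1 q.1 q.2.
Proof. by move=> HF; have := rho_coassoc CA a HF; rewrite !big_allpairs_dep. Qed.

Lemma mull (b : A) : islin (fun a : A => a * b).
Proof. by move=> k x y; rewrite mulrDl scalerAl. Qed.
Lemma mulr (b : A) : islin (fun a : A => b * a).
Proof. by move=> k x y; rewrite mulrDr scalerAr. Qed.
Lemma ac1 h : islin (fun c => ac c h).
Proof. exact: (act_bilin MC).1. Qed.
Lemma ac2 c : islin (ac c).
Proof. exact: (act_bilin MC).2. Qed.

Lemma lin_mul_l (U : lmodType R) (f : U -> A) b : islin f -> islin (fun x => f x * b).
Proof. by move=> Hf k x y; rewrite Hf mulrDl scalerAl. Qed.
Lemma lin_mul_r (U : lmodType R) (f : U -> A) b : islin f -> islin (fun x => b * f x).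
Proof. by move=> Hf k x y; rewrite Hf mulrDr scalerAr. Qed.

Definition psi0 (th th' : C -> C -> A) c d :=
  \sum_(p <- D c) \sum_(q <- D p.1) th p.2 d * th' q.1 q.2.

Lemma formula th th' : V3 CA MC th -> bilin th' ->
  forall c d, kmul CA MC th th' c d = psi0 th th' c d.
Proof.
case=> Hb _ H3 Hb' c d; rewrite /kmul /psi0.
transitivity (\sum_(p <- D c) \sum_(u <- D p.2) th u.2 d * th' p.1 u.1).
  apply: eq_bigr => p _.
  have := H3 p.2 d A (fun x a => a * th' p.1 x).
  rewrite big_map big_allpairs_dep /= => ->; first by [].
  split=> [a|x]; [exact: lin_mul_r (Hb'.2 _)|exact: mull].
symmetry; apply: (coassS MC (F := fun x y z => th z d * th' x y)).
split; [|split] => ? ?.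
- exact: lin_mul_r (Hb'.1 _).
- exact: lin_mul_r (Hb'.2 _).
- exact: lin_mul_l (Hb.1 _).
Qed.

Lemma psi0_bilin th th' : bilin th -> bilin th' -> bilin (psi0 th th').
Proof.
move=> Hb Hb'; split.
- move=> d; apply: (tlinS (G := fun x z => \sum_(q <- D x) th z d * th' q.1 q.2)).
    exact: cDelta_lin.
  split.
  + move=> z; apply: (tlinS (G := fun u v => th z d * th' u v)); first exact: cDelta_lin.
    by split=> ?; [exact: lin_mul_r (Hb'.1 _)|exact: lin_mul_r (Hb'.2 _)].
  + move=> x; apply: islin_sum => q; exact: lin_mul_l (Hb.1 _).
- move=> c; apply: islin_sum => p; apply: islin_sum => q.
  exact: lin_mul_l (Hb.2 _).
Qed.

Lemma right_unit th th' : V3 CA MC th' -> bilin th -> normalized MC th ->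
  forall c d, kmul CA MC th' th c d = th' c d.
Proof.
move=> HV Hb Hn c d; rewrite formula // /psi0.
have Hb' : bilin th' by case: HV.
transitivity (\sum_(p <- D c) cEps MC p.1 *: th' p.2 d).
  by apply: eq_bigr => p _; rewrite -mulr_sumr Hn -scalerAr mulr1.
have := linS (Hb'.1 d) (D c) (fun p => cEps MC p.1 *: p.2).
move=> E; rewrite -{2}(cCounitl MC c) E /=; apply: eq_bigr => p _; by rewrite (linZ (Hb'.1 d)).
Qed.

Lemma HId (P : lmodType R) (Phi : H -> H -> H -> H -> A -> P) :
  (forall b, quadlin (fun h1 h2 h3 h4 => Phi h1 h2 h3 h4 b)) ->
  (forall h1 h2 h3 h4, islin (Phi h1 h2 h3 h4)) ->
  forall a,
  \sum_(r <- rh a) \sum_(s <- DH r.1) \sum_(r' <- rh r.2) \sum_(s' <- DH r'.1)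
     Phi s.1 s.2 s'.1 s'.2 r'.2 =
  \sum_(r <- rh a) \sum_(s <- DH r.1) \sum_(k <- DH s.1) \sum_(k' <- DH k.1)
     Phi k'.1 k'.2 k.2 s.2 r.2.
Proof.
move=> HQ HL a.
transitivity (\sum_(r <- rh a) \sum_(r' <- rh r.2) \sum_(s <- DH r.1)
     \sum_(s' <- DH r'.1) Phi s.1 s.2 s'.1 s'.2 r'.2).
  by apply: eq_bigr => r _; rewrite exchange_big.
rewrite -(rho_coassS a (F := fun h h' b => \sum_(s <- DH h) \sum_(s' <- DH h')
     Phi s.1 s.2 s'.1 s'.2 b)).
  apply: eq_bigr => r _.
  by rewrite (B2_R (hco BH) (HQ r.2)) -(B1_R (hco BH) (HQ r.2)).
split; [|split].
- move=> h' b; apply: (tlinS (G := fun u v => \sum_(s' <- DH h') Phi u v s'.1 s'.2 b)).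
    exact: cDelta_lin.
  case: (HQ b) => H1 H2 H3 H4.
  by split=> ?; apply: islin_sum => ?; [exact: H1|exact: H2].
- move=> h b; apply: islin_sum => s.
  apply: (tlinS (G := fun u v => Phi s.1 s.2 u v b)); first exact: cDelta_lin.
  case: (HQ b) => H1 H2 H3 H4.
  by split=> ?; [exact: H3|exact: H4].
- move=> h h'; apply: islin_sum => s; apply: islin_sum => s'; exact: HL.
Qed.

Lemma G1_bilin (th th' : C -> C -> A) (e : C) : bilin th -> bilin th' ->
  bilin (fun x z => \sum_(q <- D x) th z e * th' q.1 q.2).
Proof.
move=> Hb Hb'; split.
+ move=> z; apply: (tlinS (G := fun u v => th z e * th' u v)); first exact: cDelta_lin.
  by split=> ?; [exact: lin_mul_r (Hb'.1 _)|exact: lin_mul_r (Hb'.2 _)].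
+ move=> x; apply: islin_sum => q; exact: lin_mul_l (Hb.1 _).
Qed.

Lemma G2_bilin (th' : C -> C -> A) (y : A) : bilin th' -> bilin (fun u v => y * th' u v).
Proof.
by move=> Hb'; split=> ?; [exact: lin_mul_r (Hb'.1 _)|exact: lin_mul_r (Hb'.2 _)].
Qed.

Lemma cond2 th th' : V3 CA MC th -> V3 CA MC th' ->
  forall (a : A) c d, psi0 th th' c d * a =
        \sum_(r <- rh a) \sum_(s <- DH r.1)
            r.2 * psi0 th th' (ac c s.1) (ac d s.2).
Proof.
case=> Hb H2 H3; case=> Hb' H2' H3' a c d.
pose Phi x y z h1 h2 h3 h4 b := b * th (ac x h3) (ac d h4) * th' (ac y h1) (ac z h2).
transitivity (\sum_(p <- D c) \sum_(q <- D p.1) \sum_(r <- rh a) \sum_(s <- DH r.1)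
   \sum_(r' <- rh r.2) \sum_(s' <- DH r'.1) Phi p.2 q.1 q.2 s.1 s.2 s'.1 s'.2 r'.2).
  rewrite /psi0 mulr_suml; apply: eq_bigr => p _; rewrite mulr_suml; apply: eq_bigr => q _.
  rewrite -mulrA H2' mulr_sumr; apply: eq_bigr => r _; rewrite mulr_sumr; apply: eq_bigr => s _.
  rewrite mulrA H2 mulr_suml; apply: eq_bigr => r' _; rewrite mulr_suml.
  by apply: eq_bigr.
transitivity (\sum_(p <- D c) \sum_(q <- D p.1) \sum_(r <- rh a) \sum_(s <- DH r.1)
   \sum_(k <- DH s.1) \sum_(k' <- DH k.1) Phi p.2 q.1 q.2 k'.1 k'.2 k.2 s.2 r.2).
  apply: eq_bigr => p _; apply: eq_bigr => q _; apply: HId.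
    move=> b; split.
    - move=> h2 h3 h4; exact: lin_mul_r (islin_comp (ac2 _) (Hb'.1 _)).
    - move=> h1 h3 h4; exact: lin_mul_r (islin_comp (ac2 _) (Hb'.2 _)).
    - move=> h1 h2 h4; apply: lin_mul_l; exact: lin_mul_r (islin_comp (ac2 _) (Hb.1 _)).
    - move=> h1 h2 h3; apply: lin_mul_l; exact: lin_mul_r (islin_comp (ac2 _) (Hb.2 _)).
  move=> h1 h2 h3 h4; apply: lin_mul_l; exact: mull.
symmetry.
transitivity (\sum_(r <- rh a) \sum_(s <- DH r.1) \sum_(p <- D c) \sum_(k <- DH s.1)
   \sum_(q <- D p.1) \sum_(k' <- DH k.1) Phi p.2 q.1 q.2 k'.1 k'.2 k.2 s.2 r.2).
  apply: eq_bigr => r _; apply: eq_bigr => s _.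
  rewrite /psi0 (mDeltaS _ _ (G := fun x z => \sum_(q <- D x) th z (ac d s.2) * th' q.1 q.2));
    last exact: G1_bilin.
  rewrite mulr_sumr; apply: eq_bigr => p _; rewrite mulr_sumr; apply: eq_bigr => k _.
  rewrite (mDeltaS _ _ (G := fun u v => th (ac p.2 k.2) (ac d s.2) * th' u v));
    last exact: G2_bilin.
  rewrite mulr_sumr; apply: eq_bigr => q _; rewrite mulr_sumr; apply: eq_bigr => k' _.
  by rewrite /Phi mulrA.
transitivity (\sum_(r <- rh a) \sum_(s <- DH r.1) \sum_(p <- D c) \sum_(q <- D p.1)
   \sum_(k <- DH s.1) \sum_(k' <- DH k.1) Phi p.2 q.1 q.2 k'.1 k'.2 k.2 s.2 r.2).
  by apply: eq_bigr => r _; apply: eq_bigr => s _; apply: eq_bigr => p _; rewrite exchange_big.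
transitivity (\sum_(r <- rh a) \sum_(p <- D c) \sum_(q <- D p.1) \sum_(s <- DH r.1)
   \sum_(k <- DH s.1) \sum_(k' <- DH k.1) Phi p.2 q.1 q.2 k'.1 k'.2 k.2 s.2 r.2).
  apply: eq_bigr => r _; rewrite exchange_big; apply: eq_bigr => p _.
  by rewrite exchange_big.
rewrite exchange_big; apply: eq_bigr => p _; by rewrite exchange_big.
Qed.

Lemma tlin_sumS (U V W P : lmodType R) (f : U -> seq (V * W)) (G : V -> W -> P) :
  tlin f -> bilin G -> forall I (s : seq I) (F : I -> U),
  \sum_(p <- f (\sum_(i <- s) F i)) G p.1 p.2 =
  \sum_(i <- s) \sum_(p <- f (F i)) G p.1 p.2.
Proof.
move=> Hf HG I s F.
exact: (linS (f := fun x => \sum_(p <- f x) G p.1 p.2) (tlinS Hf HG)).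
Qed.

Lemma gcomp_bilin (P : lmodType R) (g : C -> A -> P) y (c0 : A) : bilin g ->
  bilin (fun h b => g (ac y h) (c0 * b)).
Proof.
move=> Hg; split=> ?; [exact: islin_comp (ac2 y) (Hg.1 _)|exact: islin_comp (mulr c0) (Hg.2 _)].
Qed.

Lemma cond3 th th' : V3 CA MC th -> V3 CA MC th' ->
  forall c d,
        teq2 [seq (p.1, psi0 th th' p.2 d) | p <- D c]
             [seq (ac q.2 r.1, r.2) | q <- D d, r <- rh (psi0 th th' c q.1)].
Proof.
case=> Hb H2 H3; case=> Hb' H2' H3' c d P g Hg.
rewrite big_map big_allpairs_dep /=.
pose Phi w x y z := g w (th z d * th' x y).
have HPhi : quadlin Phi.
  split.
  - move=> x y z; exact: Hg.1.
  - move=> w y z; exact: islin_comp (lin_mul_r _ (Hb'.1 _)) (Hg.2 _).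
  - move=> w x z; exact: islin_comp (lin_mul_r _ (Hb'.2 _)) (Hg.2 _).
  - move=> w x y; exact: islin_comp (lin_mul_l _ (Hb.1 _)) (Hg.2 _).
pose Psi w x y z := \sum_(r2 <- rh (th' w x)) g (ac y r2.1) (th z d * r2.2).
have HPsi : quadlin Psi.
  split.
  - move=> x y z; rewrite /Psi; exact: (tlinS_comp (h := fun w => th' w x)
      (G := fun h b => g (ac y h) (th z d * b)) (Hb'.1 _) (rho_lin CA) (gcomp_bilin _ _ Hg)).
  - move=> w y z; rewrite /Psi; exact: (tlinS_comp (h := fun x => th' w x)
      (G := fun h b => g (ac y h) (th z d * b)) (Hb'.2 _) (rho_lin CA) (gcomp_bilin _ _ Hg)).
  - move=> w x z; rewrite /Psi; apply: islin_sum => r2; exact: islin_comp (ac1 _) (Hg.1 _).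
  - move=> w x y; rewrite /Psi; apply: islin_sum => r2.
    exact: islin_comp (lin_mul_l _ (Hb.1 _)) (Hg.2 _).
transitivity (\sum_(p <- D c) \sum_(u <- D p.2) \sum_(v <- D u.1) Phi p.1 v.1 v.2 u.2).
  apply: eq_bigr => p _; rewrite /psi0 (linS (Hg.2 p.1)); apply: eq_bigr => u _.
  by rewrite (linS (Hg.2 p.1)).
rewrite (B4_R MC HPhi) -(B1_R MC HPhi) /Phi.
symmetry.
have Hgq : forall q, bilin (fun h b => g (ac q h) b).
  by move=> q; split=> ?; [exact: islin_comp (ac2 q) (Hg.1 _)|exact: Hg.2].
transitivity (\sum_(q <- D d) \sum_(p <- D c) \sum_(p' <- D p.1)
   \sum_(r1 <- rh (th p.2 q.1)) \sum_(r2 <- rh (th' p'.1 p'.2))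
      g (ac (ac q.2 r1.1) r2.1) (r1.2 * r2.2)).
  apply: eq_bigr => q _; rewrite /psi0.
  rewrite (tlin_sumS (rho_lin CA) (Hgq q.2)); apply: eq_bigr => p _.
  rewrite (tlin_sumS (rho_lin CA) (Hgq q.2)); apply: eq_bigr => p' _.
  rewrite (rho_mulS _ _ (G := fun h b => g (ac q.2 h) b)) //.
  apply: eq_bigr => r1 _; apply: eq_bigr => r2 _; by rewrite act_mul.
pose K (p' : C * C) x b := \sum_(r2 <- rh (th' p'.1 p'.2)) g (ac x r2.1) (b * r2.2).
have HK : forall p', bilin (K p').
  move=> p'; split=> ?; apply: islin_sum => r2.
  - exact: islin_comp (ac1 _) (Hg.1 _).
  - exact: islin_comp (mull _) (Hg.2 _).
transitivity (\sum_(p <- D c) \sum_(p' <- D p.1) \sum_(q <- D d)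
   \sum_(r1 <- rh (th p.2 q.1)) K p' (ac q.2 r1.1) r1.2).
  rewrite exchange_big; apply: eq_bigr => p _; by rewrite exchange_big.
transitivity (\sum_(p <- D c) \sum_(p' <- D p.1) \sum_(u <- D p.2) Psi p'.1 p'.2 u.1 u.2).
  apply: eq_bigr => p _; apply: eq_bigr => p' _.
  have := H3 p.2 d P (K p') (HK p').
  by rewrite big_map big_allpairs_dep /= => <-.
rewrite (B2_R MC HPsi) -(B3_R MC HPsi).
apply: eq_bigr => p _; apply: eq_bigr => t _.
have := H3' t.1 t.2 P (fun x b => g x (th p.2 d * b)).
rewrite big_map big_allpairs_dep /= => ->; first by [].
by split=> ?; [exact: Hg.1|exact: islin_comp (mulr _) (Hg.2 _)].
Qed.
End Main.

Theorem lemma2p1p6 (R : comPzRingType) (H : algType R) (BH : bialgebra H)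
  (A : algType R) (CA : comodule_algebra BH A)
  (C : lmodType R) (MC : module_coalgebra BH C) (Cflat : flat C) :
  (forall theta theta' : C -> C -> A,
     V3 CA MC theta -> V3 CA MC theta' ->
     V3 CA MC (kmul CA MC theta theta') /\
     (forall c d : C,
        kmul CA MC theta theta' c d =
        \sum_(p <- cDelta MC c) \sum_(q <- cDelta MC p.1)
            theta p.2 d * theta' q.1 q.2)) /\
  (forall theta : C -> C -> A,
     V3 CA MC theta -> normalized MC theta ->
     (forall theta' : C -> C -> A, V3 CA MC theta' ->
        forall c d : C, kmul CA MC theta' theta c d = theta' c d) /\
     (forall c d : C, kmul CA MC theta theta c d = theta c d)).
Proof.
split.
  move=> th th' HV HV'.
  have Hb : bilin th by case: HV.
  have Hb' : bilin th' by case: HV'.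
  have E : kmul CA MC th th' = psi0 MC th th'.
    apply: functional_extensionality => c; apply: functional_extensionality => d.
    exact: formula.
  split; last exact: formula.
  rewrite E; split.
  - exact: psi0_bilin.
  - exact: cond2.
  - exact: cond3.
move=> th HV Hn.
have Hb : bilin th by case: HV.
split; first by move=> th' HV'; exact: right_unit.
exact: right_unit.
Qed.
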